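(* Let $p$ be a prime and let $A$ be a nontrivial finite $p$-group. Define $A_0=A$ and $A_n=A_{n-1}\wr \mathbb{Z}/p\mathbb{Z}$ for $n\ge1$. Then for every integer $k$, $\lim_{n\to\infty} r_{A_n,k}=1$.
   Context: For a finite $p$-group $G$ with $|G|=p^g$ and maximum element order $p^{f}$, and for $k\in\mathbb{Z}$, define $r_{G,k}=\frac{1}{p^g}\cdot\#\{x\in G:\ \mathrm{order}(x)\le p^{f-k}\}$. For groups $A,B$, let $K=\prod_{b\in B}A$, on which $B$ acts by $x\cdot(\alpha_b)_b=(\alpha_{x^{-1}b})_b$ for $x\in B$; the wreath product $A\wr B$ is the semidirect product $K\rtimes B$ for this action. *)

(* Defs.v *)
From HB Require Import structures.
From mathcomp Require Import all_boot all_order all_algebra all_fingroup all_solvable.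
From mathcomp Require Import all_classical all_reals all_analysis.
Set Implicit Arguments. Unset Strict Implicit. Unset Printing Implicit Defensive.
Import Order.TTheory GRing.Theory Num.Theory.

(* Wreath product A wr B = K x| B with K = prod_{b in B} A = {ffun B -> A},
   B acting by (x . alpha)_b = alpha_{x^-1 b}. *)
Section Wreath.
Variables (A B : finGroupType).

Definition wreath : Type := ({ffun B -> A} * B)%type.
HB.instance Definition _ := Finite.on wreath.

Local Open Scope group_scope.

Definition wact (x : B) (f : {ffun B -> A}) : {ffun B -> A} :=
  [ffun b => f (x^-1 * b)].

Definition wmul (u v : wreath) : wreath :=
  ([ffun b => u.1 b * wact u.2 v.1 b], u.2 * v.2).
Definition wone : wreath := ([ffun => 1], 1).
Definition winv (u : wreath) : wreath :=
  ([ffun b => (u.1 (u.2 * b))^-1], u.2^-1).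

Lemma wmulA : associative wmul.
Proof.
move=> [f x] [g y] [h z]; rewrite /wmul /wact /=; congr (_, _); last first.
  by rewrite mulgA.
by apply/ffunP=> b; rewrite !ffunE invMg !mulgA.
Qed.

Lemma wmul1 : left_id wone wmul.
Proof.
move=> [f x]; rewrite /wmul /wact /=; congr (_, _); last by rewrite mul1g.
by apply/ffunP=> b; rewrite !ffunE invg1 !mul1g.
Qed.

Lemma wmulV : left_inverse wone winv wmul.
Proof.
move=> [f x]; rewrite /wmul /wact /=; congr (_, _); last by rewrite mulVg.
by apply/ffunP=> b; rewrite !ffunE invgK mulVg.
Qed.

HB.instance Definition _ := Finite_isGroup.Build wreath wmulA wmul1 wmulV.
End Wreath.

Fixpoint iter_wreath (p : nat) (A : finGroupType) (n : nat) : finGroupType :=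
  match n with
  | 0 => A
  | n'.+1 => wreath (iter_wreath p A n') ('Z_p)
  end.

Definition max_ord_exp (p : nat) (G : finGroupType) : nat :=
  logn p (\max_(x : G) #[x]%g).

Local Open Scope ring_scope.
Definition r_ (R : realType) (p : nat) (G : finGroupType) (k : int) : R :=
  #|[set x : G | (#[x]%g%:R : R) <= (p%:R : R) ^ ((max_ord_exp p G)%:Z - k)]|%:R
  / #|[set: G]|%:R.

(* Main.v *)
Require Import Defs.
From HB Require Import structures.
From mathcomp Require Import all_boot all_order all_algebra all_fingroup all_solvable.
From mathcomp Require Import all_classical all_reals all_analysis.
From mathcomp Require Import ring lra.
Import numFieldNormedType.Exports.
Import Order.TTheory GRing.Theory Num.Theory.

Section W.
Local Set Implicit Arguments.
Local Unset Strict Implicit.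
Local Open Scope group_scope.
Variables (A B : finGroupType).
Implicit Types u v : wreath A B.

Lemma wmulE u v : u * v = wmul u v. Proof. by []. Qed.
Lemma woneE : (1 : wreath A B) = wone A B. Proof. by []. Qed.

Lemma wexp2 u m : (u ^+ m).2 = u.2 ^+ m.
Proof. by elim: m => [|m IH] //; rewrite !expgS wmulE /= IH. Qed.

Lemma wexp u m b : (u ^+ m).1 b = \prod_(i < m) u.1 (u.2 ^- i * b).
Proof.
elim: m b => [|m IH] b; first by rewrite big_ord0 /= ffunE.
rewrite expgS wmulE /= ffunE /wact ffunE IH big_ord_recl /= expg0 invg1 mul1g.
congr (_ * _); apply: eq_bigr => i _.
by rewrite mulgA -invMg -expgS.
Qed.

Lemma weq1 u : (u == 1) = [forall b, u.1 b == 1] && (u.2 == 1).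
Proof.
case: u => f x /=; rewrite woneE /wone xpair_eqE; congr (_ && _).
apply/eqP/forallP => [-> b|H]; first by rewrite ffunE.
by apply/ffunP => b; rewrite ffunE; apply/eqP.
Qed.

Lemma wexp_triv u m b : u.2 = 1 -> (u ^+ m).1 b = u.1 b ^+ m.
Proof.
move=> h; elim: m => [|m IH]; first by rewrite /= ffunE.
by rewrite expgS wmulE /= ffunE /wact ffunE h invg1 mul1g IH expgS.
Qed.

Lemma wexp_triv_eq1 u m : u.2 = 1 -> (u ^+ m == 1) = [forall b, u.1 b ^+ m == 1].
Proof.
move=> h; rewrite weq1 wexp2 h expg1n eqxx andbT.
by apply: eq_forallb => b; rewrite wexp_triv.
Qed.

Hypothesis prB : prime #|B|.
Let q := #|B|.
Let q_gt0 : (0 < q)%N. Proof. exact: prime_gt0. Qed.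

Lemma xq1 (x : B) : x ^+ q = 1.
Proof. by rewrite /q -cardsT expg_cardG ?inE. Qed.

Lemma ordB (x : B) : x != 1 -> #[x] = q.
Proof.
move=> nx; have : (#[x] %| q)%N by rewrite /q -cardsT order_dvdG ?inE.
case/primeP: prB => _ /[apply] /orP[/eqP|/eqP] //.
by move/eqP; rewrite order_eq1 (negbTE nx).
Qed.

Lemma genB (x : B) : x != 1 -> forall b, exists j, b = x ^+ j.
Proof.
move=> nx b; apply/cycleP.
suff -> : <[x]> = [set: B] by rewrite inE.
apply/eqP; rewrite eqEcard finset.subsetT cardsT -/q -(ordB nx) /order leqnn.
by [].
Qed.

Lemma expB_neq1 (x : B) i : x != 1 -> (0 < i < q)%N -> x ^+ i != 1.
Proof.
move=> nx /andP[i0 iq]; rewrite -order_dvdn ordB //.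
by apply/negP => /(dvdn_leq i0); rewrite leqNgt iq.
Qed.

Lemma prod_recl (F : nat -> A) n : (0 < n)%N ->
  \prod_(i < n) F i = F 0%N * \prod_(i < n.-1) F i.+1.
Proof. by case: n => // n _; rewrite big_ord_recl. Qed.

Lemma prod_recr (F : nat -> A) n : (0 < n)%N ->
  \prod_(i < n) F i = \prod_(i < n.-1) F i * F n.-1.
Proof. by case: n => // n _; rewrite big_ord_recr. Qed.

Definition beta (f : {ffun B -> A}) (x b : B) := \prod_(i < q) f (x ^- i * b).

Lemma beta_conj f x b : beta f x (x^-1 * b) = beta f x b ^ f b.
Proof.
rewrite /beta (prod_recl (fun i => f (x ^- i * b))) // expg0 invg1 mul1g.
rewrite (prod_recr (fun i => f (x ^- i * (x^-1 * b)))) //.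
rewrite conjgE [RHS]mulgA mulKg; congr (_ * _).
  by apply: eq_bigr => i _; rewrite mulgA -invMg -expgS.
by rewrite mulgA -invMg -expgS prednK // xq1 invg1 mul1g.
Qed.

Lemma beta_all f x N : x != 1 ->
  [forall b, beta f x b ^+ N == 1] = (beta f x 1 ^+ N == 1).
Proof.
move=> nx; apply/forallP/idP => [/(_ 1)//|h b].
have nx' : x^-1 != 1 by rewrite invg_eq1.
have [j ->] := genB nx' b.
elim: j => [|j IH]; first by rewrite expg0.
rewrite expgS beta_conj -conjXg; move/eqP: IH => ->.
by rewrite conj1g.
Qed.

Lemma wpow_nontriv (u : wreath A B) N : u.2 != 1 ->
  (u ^+ (q * N) == 1) = (beta u.1 u.2 1 ^+ N == 1).
Proof.
move=> nx; rewrite expgM wexp_triv_eq1; last by rewrite wexp2 xq1.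
rewrite -(beta_all _ _ nx); apply: eq_forallb => b.
by rewrite wexp.
Qed.


Lemma card_split (P : wreath A B -> bool) :
  #|[set u | P u]| = \sum_(x : B) #|[set f : {ffun B -> A} | P (f, x)]|.
Proof.
have E : forall (T : finType) (Q : T -> bool),
    #|[set t | Q t]| = \sum_(t : T) (Q t : nat).
  move=> T Q; rewrite -sum1_card big_mkcond /=; apply: eq_bigr => t _.
  by rewrite inE; case: (Q t).
rewrite E (eq_bigr (fun x => \sum_(f : {ffun B -> A}) (P (f, x) : nat))); last first.
  by move=> x _; rewrite E.
rewrite exchange_big /= (pair_big xpredT xpredT (fun f x => (P (f, x) : nat))) /=.
by apply: eq_bigr => -[f x].
Qed.

Definition Sset N := [set a : A | a ^+ N == 1].

Lemma card_triv N :
  #|[set f : {ffun B -> A} | [forall b, f b ^+ N == 1]]| = (#|Sset N| ^ q)%N.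
Proof.
rewrite -card_ffun_on; apply: eq_card => f; rewrite inE.
apply/forallP/ffun_onP => h b; first by rewrite inE h.
by have := h b; rewrite inE.
Qed.

Lemma card_nontriv x N : x != 1 ->
  #|[set f : {ffun B -> A} | beta f x 1 ^+ N == 1]| = (#|Sset N| * #|A| ^ q.-1)%N.
Proof.
move=> nx.
pose phi (f : {ffun B -> A}) := [ffun b => if b == 1 then beta f x 1 else f b].
have inj : injective phi.
  move=> f g /ffunP E; apply/ffunP => b.
  case: (eqVneq b 1) => [->|nb]; last by have := E b; rewrite !ffunE (negbTE nb).
  have := E 1; rewrite !ffunE eqxx /beta.
  rewrite (prod_recl (fun i => f (x ^- i * 1))) // (prod_recl (fun i => g (x ^- i * 1))) //.
  rewrite !expg0 invg1 !mul1g.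
  have -> : \prod_(i < q.-1) f (x ^- i.+1 * 1) = \prod_(i < q.-1) g (x ^- i.+1 * 1).
    apply: eq_bigr => i _; have := E (x ^- i.+1 * 1).
    have iq : (0 < i.+1 < q)%N by have := ltn_ord i; rewrite -ltnS prednK.
    by rewrite !ffunE mulg1 invg_eq1 (negbTE (expB_neq1 nx iq)).
  by move/mulIg.
have -> : [set f | beta f x 1 ^+ N == 1] = phi @^-1: [set g : {ffun B -> A} | g 1 ^+ N == 1].
  by apply/setP => f; rewrite !inE ffunE eqxx.
rewrite card_preimset //.
pose F := fun b : B => [pred a : A | (b != 1) || (a ^+ N == 1)].
rewrite (@eq_card _ _ (family F)); last first.
  move=> g; rewrite !inE; apply/idP/familyP => [h b|h].
    by rewrite /F /= ; case: eqP => [->|]; rewrite ?h ?orbT.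
  by have := h 1; rewrite /F /= eqxx.
rewrite card_family foldrE big_map big_enum /= (bigD1 1) //=.
congr (_ * _)%N.
  by apply: eq_card => a; rewrite !inE /= eqxx.
rewrite (eq_bigr (fun _ => #|A|)); last first.
  by move=> b nb; apply: eq_card => a; rewrite /= nb.
rewrite prod_nat_const cardC1.
by [].
Qed.


Lemma card_wpow N : #|[set u : wreath A B | u ^+ (q * N) == 1]| =
  (#|Sset (q * N)| ^ q + q.-1 * (#|Sset N| * #|A| ^ q.-1))%N.
Proof.
rewrite card_split (bigD1 1) //=; congr (_ + _)%N.
  rewrite -card_triv; apply: eq_card => f; rewrite !inE.
  by rewrite wexp_triv_eq1.
rewrite (eq_bigr (fun _ => (#|Sset N| * #|A| ^ q.-1)%N)); last first.
  move=> x nx; rewrite -(card_nontriv N nx); apply: eq_card => f; rewrite !inE.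
  by rewrite wpow_nontriv.
by rewrite sum_nat_const cardC1.
Qed.

Lemma card_wreath : #|[set: wreath A B]| = (#|A| ^ q * q)%N.
Proof.
rewrite cardsT; have := card_prod {ffun B -> A} B; rewrite card_ffun => <-.
by [].
Qed.


Lemma exists_nt : exists x : B, x != 1.
Proof.
have : [set: B] != 1 by rewrite -cardG_gt1 cardsT prime_gt1.
by case/trivgPn => x _ nx; exists x.
Qed.

Lemma exp_wreath (a : A) : #[a] = exponent [set: A] ->
  exponent [set: wreath A B] = (q * exponent [set: A])%N.
Proof.
move=> oa; apply/eqP; rewrite eqn_dvd; apply/andP; split.
  apply/exponentP => u _.
  case: (eqVneq u.2 1) => [h|h].
    apply/eqP; rewrite wexp_triv_eq1 //; apply/forallP => b.
    by rewrite mulnC expgM expg_exponent ?inE // expg1n.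
  by apply/eqP; rewrite wpow_nontriv // expg_exponent ?inE.
have [x nx] := exists_nt.
pose u : wreath A B := ([ffun b => if b == 1 then a else 1], x).
have uT : u \in [set: wreath A B] by rewrite inE.
apply: (dvdn_trans _ (dvdn_exponent uT)).
have h1 := expg_order u.
have : (q %| #[u])%N.
  rewrite -(ordB nx) order_dvdn -(wexp2 u) .
  by rewrite h1.
case/dvdnP => m Em; rewrite Em [(m * q)%N]mulnC dvdn_pmul2l //.
move/eqP: h1; rewrite Em mulnC wpow_nontriv //=.
rewrite /beta (prod_recl (fun i => u.1 (x ^- i * 1))) // expg0 invg1 mul1g /= ffunE eqxx.
rewrite big1 ?mulg1 => [h|i _]; first by rewrite -oa order_dvdn h.
have iq : (0 < i.+1 < q)%N by have := ltn_ord i; rewrite -ltnS prednK.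
by rewrite ffunE mulg1 invg_eq1 (negbTE (expB_neq1 nx iq)).
Qed.

End W.

Section Real.
Local Open Scope ring_scope.
Local Open Scope classical_set_scope.
Lemma step_cvg (R : realType) (c : R) (u w : nat -> R) (N : nat) :
  0 <= c -> c < 1 -> w @ \oo --> (1:R) -> (forall n, 0 <= u n <= 1) ->
  (forall n, (N <= n)%N -> u n.+1 = (1 - c) * w n + c * u n) -> u @ \oo --> (1:R).
Proof.
move=> c0 c1 wc u01 rec.
apply/cvgrPdist_le => e e0.
have e20 : 0 < e / 2 by rewrite divr_gt0.
have := (cvgrPdist_le _ _).1 wc _ e20.
case=> N1 _ HN1.
have cc : `|c| < 1 by rewrite ger0_norm.
have := (cvgrPdist_le _ _).1 (cvg_expr cc) _ e20.
case=> K _ HK.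
pose M := maxn N N1.
have key : forall k, `|1 - u (M + k)%N| <= e / 2 + c ^+ k.
  elim=> [|k IH].
    rewrite addn0 expr0.
    have /andP[a b] := u01 M.
    rewrite ger0_norm ?subr_ge0 //.
    have : 0 <= e / 2 by apply: ltW.
    move=> h; lra.
  rewrite addnS rec; last by rewrite (leq_trans (leq_maxl N N1)) // leq_addr.
  have hw : `|1 - w (M + k)%N| <= e / 2.
    by apply: HN1 => /=; rewrite (leq_trans (leq_maxr N N1)) // leq_addr.
  have -> : 1 - ((1 - c) * w (M + k)%N + c * u (M + k)%N) =
            (1 - c) * (1 - w (M + k)%N) + c * (1 - u (M + k)%N) by ring.
  apply: (le_trans (ler_normD _ _)).
  have c1' : 0 <= 1 - c by rewrite subr_ge0 ltW.
  rewrite !normrM (ger0_norm c0) (ger0_norm c1').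
  have h1 : (1 - c) * `|1 - w (M + k)%N| <= (1 - c) * (e / 2).
    by rewrite ler_wpM2l // subr_ge0 ltW.
  have h2 : c * `|1 - u (M + k)%N| <= c * (e / 2 + c ^+ k).
    by rewrite ler_wpM2l.
  rewrite exprS.
  apply: (le_trans (lerD h1 h2)); rewrite le_eqVlt; apply/orP; left; apply/eqP; ring.
exists (M + K)%N => // n /= hn.
have -> : n = (M + (n - M))%N by rewrite subnKC // (leq_trans (leq_addr K M)) // addnC.
apply: (le_trans (key _)).
have : `|0 - c ^+ (n - M)| <= e / 2.
  by apply: HK => /=; rewrite leq_subRL ?(leq_trans (leq_addr K M)) // addnC.
rewrite sub0r normrN ger0_norm ?exprn_ge0 // => h.
lra.
Qed.

Lemma real_rec (R : realType) (a b g p : nat) : g != 0%N -> (0 < p)%N ->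
  ((a ^ p + p.-1 * (b * g ^ p.-1))%N%:R / (g ^ p * p)%N%:R : R) =
  (1 - (1 - p%:R^-1)) * ((a%:R / g%:R) ^+ p) + (1 - p%:R^-1) * (b%:R / g%:R).
Proof.
move=> g0; case: p => // P _ /=.
have g0' : (g%:R : R) != 0 by rewrite pnatr_eq0.
have gP : (g%:R : R) ^+ P != 0 by rewrite expf_neq0.
have P0 : (P.+1%:R : R) != 0 by rewrite pnatr_eq0.
rewrite !natrD !natrM !natrX expr_div_n !exprS.
field.
by move: P0; rewrite -natr1 addrC => ->; rewrite gP g0'.
Qed.

Lemma cvg_pow (R : realType) (w : nat -> R) k : w @ \oo --> (1:R) ->
  (fun n => w n ^+ k) @ \oo --> (1:R).
Proof.
move=> hw; elim: k => [|k IH].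
  by rewrite (_ : (fun n => w n ^+ 0) = (fun=> 1)); [exact: cvg_cst|apply/funext].
have -> : (fun n => w n ^+ k.+1) = (w \* (fun n => w n ^+ k)).
  by apply/funext => n; rewrite /= exprS.
rewrite -[X in _ --> X](mulr1 1); exact: cvgM.
Qed.
End Real.

Section Main.
Variables (p : nat) (A : finGroupType).
Hypothesis pr : prime p.
Hypothesis pA : (p.-group [set: A])%g.
Local Notation G n := (iter_wreath p A n).
Local Open Scope group_scope.

Let p_gt0 : (0 < p)%N. Proof. exact: prime_gt0. Qed.
Let p_gt1 : (1 < p)%N. Proof. exact: prime_gt1. Qed.

Lemma cardZp : #|'Z_p| = p.
Proof. by rewrite card_ord Zp_cast. Qed.

Lemma prZ : prime #|'Z_p|.
Proof. by rewrite cardZp. Qed.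

Lemma pG n : (p.-group [set: G n])%g.
Proof.
elim: n => [|n IH] //=.
rewrite /pgroup card_wreath cardZp pnatM pnatX pnat_id // andbT.
by move: IH; rewrite /pgroup cardsT => ->.
Qed.

Lemma eS n : exponent [set: G n.+1] = (p * exponent [set: G n])%N.
Proof.
have [a _ ea] := exponent_witness (pgroup_nil (pG n)).
by rewrite /= (exp_wreath prZ (esym ea)) cardZp.
Qed.

Definition f0 := logn p (exponent [set: A]).

Lemma eN n : exponent [set: G n] = (p ^ (f0 + n))%N.
Proof.
elim: n => [|n IH].
  rewrite addn0 /f0 -p_part part_pnat_id //=.
  exact: pnat_dvd (exponent_dvdn _) pA.
by rewrite eS IH addnS expnS.
Qed.

Lemma maxord n : (\max_(x : G n) #[x])%N = exponent [set: G n].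
Proof.
apply/eqP; rewrite eqn_leq; apply/andP; split.
  apply/bigmax_leqP => x _.
  by apply: dvdn_leq (exponent_gt0 _) (dvdn_exponent _); rewrite inE.
have [a _ ea] := exponent_witness (pgroup_nil (pG n)); rewrite ea.
exact: leq_bigmax.
Qed.

Lemma fN n : max_ord_exp p (G n) = (f0 + n)%N.
Proof. by rewrite /max_ord_exp maxord eN pfactorK. Qed.

Lemma ord_le n (x : G n) m : (#[x] <= p ^ m)%N = (x ^+ (p ^ m) == 1)%g.
Proof.
have px : p.-elt x by apply: (mem_p_elt (pG n)); rewrite inE.
rewrite -order_dvdn -(part_pnat_id px) p_part dvdn_Pexp2l // leq_exp2l //.
Qed.

Definition Cn n N := #|Sset (G n) N|.
Definition gn n := #|[set: G n]|.

Lemma gS n : gn n.+1 = (gn n ^ p * p)%N.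
Proof. by rewrite /gn /= card_wreath cardZp cardsT. Qed.

Lemma CS n N : Cn n.+1 (p * N) =
   (Cn n (p * N) ^ p + p.-1 * (Cn n N * gn n ^ p.-1))%N.
Proof.
have := card_wpow (G n) prZ N; rewrite cardZp /Cn /gn cardsT => <-.
by [].
Qed.

Lemma gn_gt0 n : (0 < gn n)%N.
Proof. exact: cardG_gt0. Qed.

Lemma C0 n : Cn n (p ^ (f0 + n)) = gn n.
Proof.
rewrite /Cn /gn -eN; apply: eq_card => x; rewrite !inE.
by rewrite expg_exponent ?inE ?eqxx.
Qed.

Lemma C_le n N : (Cn n N <= gn n)%N.
Proof. exact: subset_leq_card (finset.subsetT _). Qed.

Variable R : realType.
Local Open Scope ring_scope.
Local Open Scope classical_set_scope.

Definition Q j n : R := (Cn n (p ^ (f0 + n - j)))%:R / (gn n)%:R.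

Lemma Q01 j n : 0 <= Q j n <= 1.
Proof.
have g0 : (0 : R) < (gn n)%:R by rewrite ltr0n gn_gt0.
rewrite /Q divr_ge0 //= ler_pdivrMr // mul1r ler_nat.
exact: C_le.
Qed.

Lemma Qrec j n : (j < n)%N ->
  Q j.+1 n.+1 = (1 - (1 - p%:R^-1)) * (Q j n ^+ p) + (1 - p%:R^-1) * Q j.+1 n.
Proof.
move=> jn.
have E1 : (f0 + n.+1 - j.+1 = (f0 + n - j.+1).+1)%N.
  by rewrite addnS subSS subnSK // (leq_trans jn) // leq_addl.
have E2 : (f0 + n - j = (f0 + n - j.+1).+1)%N.
  by rewrite subnSK // (leq_trans jn) // leq_addl.
rewrite /Q E1 E2 expnS CS gS real_rec //.
by rewrite -lt0n gn_gt0.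
Qed.

Lemma Qcvg j : (Q j) @ \oo --> (1 : R).
Proof.
elim: j => [|j IH].
  have -> : Q 0 = fun=> 1.
    apply/funext => n; rewrite /Q subn0 C0 divff //.
    by rewrite pnatr_eq0 -lt0n gn_gt0.
  exact: cvg_cst.
apply: (@step_cvg R (1 - p%:R^-1) (Q j.+1) (fun n => Q j n ^+ p) j.+1).
- rewrite subr_ge0 invf_le1 ?ler1n ?ltr0n //.
- by rewrite ltrBlDr ltrDl invr_gt0 ltr0n.
- exact: cvg_pow.
- exact: Q01.
- by move=> n jn; rewrite Qrec.
Qed.

End Main.

Local Open Scope ring_scope.
Local Open Scope classical_set_scope.

Lemma pow_posz (R : realType) (x : R) n : x ^ (Posz n) = x ^+ n.
Proof. by []. Qed.

Theorem lemma3 (R : realType) (p : nat) (A : finGroupType) (k : int) :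
  prime p -> (p.-group (finset.setT : {set A}))%g -> (finset.setT : {set A}) != 1%g ->
  (fun n : nat => r_ R p (iter_wreath p A n) k) @ \oo --> (1 : R).
Proof.
move=> pr pA _.
case: k => [j|m].
  have E : {near \oo, Q p A R j =1 (fun n => r_ R p (iter_wreath p A n) j)}.
    exists j => // n /= jn.
    rewrite /r_ /Q (fN p A pr pA) /gn; congr (_ / _); congr (_%:R).
    rewrite /Cn /Sset; apply: eq_card => x; rewrite !inE subzn; last first.
      by rewrite (leq_trans jn) // leq_addl.
    by rewrite pow_posz -natrX ler_nat (ord_le p A pr pA).
  exact: cvg_trans (near_eq_cvg E) (Qcvg p A pr pA R j).
have -> : (fun n => r_ R p (iter_wreath p A n) (Negz m)) = (fun=> 1).
  apply/funext => n; rewrite /r_ (fN p A pr pA).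
  rewrite (_ : [set x | _]%SET = [set: iter_wreath p A n]%SET) ?divff //.
    by rewrite pnatr_eq0 -lt0n cardG_gt0.
  apply/setP => x; rewrite !inE NegzE opprK -PoszD pow_posz -natrX ler_nat.
  rewrite (ord_le p A pr pA) expnD expgM.
  by rewrite -(eN p A pr pA) expg_exponent ?inE // expg1n eqxx.
exact: cvg_cst.
Qed.
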